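(* Let $n=m\delta$ with integers $m,\delta\ge 1$, let $V=\mathbb{F}_2^n=V_1\times\cdots\times V_\delta$ with each brick $V_j\cong\mathbb{F}_2^m$, where $V_j$ consists of the coordinates $(j-1)m,\dots,jm-1$. Let $\gamma\in\mathrm{Sym}(V)$ be a parallel S-Box, i.e. $(x_1,\dots,x_\delta)\gamma=(x_1\gamma_1,\dots,x_\delta\gamma_\delta)$ for $x_j\in V_j$, where each $\gamma_j\in\mathrm{Sym}(V_j)$ and $0\gamma_j\neq 0$. Let $\lambda\in\mathrm{Sym}(V)$ be an invertible linear map (mixing layer) which is non-type-preserving. For $k\in V$ let $\sigma_k:v\mapsto v\boxplus k$ be the translation by $k$ modulo $2^n$, and let $\Gamma_\infty=\langle \gamma\lambda\sigma_k : k\in V\rangle\le\mathrm{Sym}(V)$ be the group generated by the round functions $\varepsilon_k=\gamma\lambda\sigma_k$. Then $\Gamma_\infty$ is primitive on $V$.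
   Context: A vector $a=(a_0,\dots,a_{n-1})\in V$ is identified with the integer $\sum_i a_i2^i$, and $\boxplus$ is addition of these integers modulo $2^n$. Maps act on the right and are composed left to right. Type of a subset: for $D\subseteq V$, its type is the sequence of $\delta$ symbols whose $j$-th entry is ''white'' if the projection of $D$ onto $V_j$ has size $1$, ''ruled'' if that projection has size $t$ with $1<t<2^m$, and ''black'' if the projection is all of $V_j$. Non-type-preserving: an invertible linear map $\lambda$ of $V$ is called non-type-preserving if for every subset $D\subseteq V$ whose type is of the form (first $a$ entries white, then $b$ entries ruled, then $c$ entries black) with integers $a,c\ge 0$, $b\in\{0,1\}$, $a+b+c=\delta$, and not all-white and not all-black, the type of $D\lambda=\{v\lambda:v\in D\}$ differs from the type of $D$. A group $G\le\mathrm{Sym}(V)$ is primitive if it is transitive and preserves no partition of $V$ other than $\{V\}$ and the partition into singletons. *)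

(* Defs.v *)
From mathcomp Require Import all_boot all_order all_algebra all_fingroup all_solvable.
Set Implicit Arguments. Unset Strict Implicit. Unset Printing Implicit Defensive.
Import GRing.Theory.
Local Open Scope ring_scope.

Notation vec n := 'rV['F_2]_n.

Definition vec2int n (v : vec n) : nat := (\sum_(i < n) (val (v ord0 i)) * 2 ^ i)%N.

Definition int2vec n (x : nat) : vec n := \row_(i < n) (odd (x %/ 2 ^ i))%:R.

Definition boxplus n (v k : vec n) : vec n :=
  int2vec n ((vec2int v + vec2int k) %% 2 ^ n).

Lemma modn_exp2S x n : (x %% 2 ^ n.+1 = x %% 2 ^ n + odd (x %/ 2 ^ n) * 2 ^ n)%N.
Proof.
have Hp : (0 < 2 ^ n)%N by rewrite expn_gt0.
rewrite -modn2 modn_divl -expnS.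
set y := (x %% 2 ^ n.+1)%N.
have -> : (x %% 2 ^ n = y %% 2 ^ n)%N.
  by rewrite /y modn_dvdm // expnS dvdn_mull.
by rewrite addnC -divn_eq.
Qed.

Lemma sum_bits x n : (\sum_(i < n) odd (x %/ 2 ^ i) * 2 ^ i = x %% 2 ^ n)%N.
Proof.
elim: n => [|n IH]; first by rewrite big_ord0 expn0 modn1.
by rewrite big_ord_recr /= IH modn_exp2S.
Qed.

Lemma vec2intK n x : vec2int (int2vec n x) = (x %% 2 ^ n)%N.
Proof.
rewrite /vec2int -sum_bits; apply: eq_bigr => i _.
by rewrite mxE; case: odd.
Qed.

Lemma int2vec_onto n (v : vec n) : exists2 x, (x < 2 ^ n)%N & v = int2vec n x.
Proof.
pose g (x : 'I_(2 ^ n)) : vec n := int2vec n x.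
have ig : injective g.
  move=> x y /(congr1 (@vec2int n)); rewrite !vec2intK !modn_small //.
  by move/val_inj.
have Hc : #|codom g| = #|vec n|.
  by rewrite card_codom // card_mx card_Fp // card_ord mul1n.
have /subset_cardP/(_ (subset_predT _)) Heq := Hc.
have : v \in codom g by rewrite Heq.
by case/codomP=> x ->; exists x.
Qed.

Lemma boxplus_inj n (k : vec n) : injective (fun v => boxplus v k).
Proof.
move=> v w; rewrite /boxplus.
have [x Hx ->] := int2vec_onto v; have [y Hy ->] := int2vec_onto w.
move/(congr1 (@vec2int n)); rewrite !vec2intK !modn_mod !(modn_small Hx, modn_small Hy).
by move/eqP; rewrite eqn_modDr !modn_small // => /eqP ->.
Qed.

Definition sigma n (k : vec n) : {perm vec n} := perm (@boxplus_inj n k).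

(* bricks: coordinate t of brick j (0-based) is coordinate j*m + t of V *)
Lemma bidx_lt m d (j : 'I_d) (t : 'I_m) : (j * m + t < m * d)%N.
Proof.
have Ht := ltn_ord t; have Hj := ltn_ord j.
apply: (@leq_trans (j * m + m)); first by rewrite ltn_add2l.
by rewrite -mulSnr mulnC leq_mul2l Hj orbT.
Qed.

Definition bidx m d (j : 'I_d) (t : 'I_m) : 'I_(m * d) := Ordinal (bidx_lt j t).

Definition brick m d (j : 'I_d) (v : vec (m * d)) : vec m :=
  \row_(t < m) v 0 (bidx j t).

Definition parallel_sbox m d (gamma : {perm vec (m * d)})
    (gammas : 'I_d -> {perm vec m}) : Prop :=
  (forall v j, brick j (gamma v) = gammas j (brick j v)).

Definition proj m d (j : 'I_d) (D : {set vec (m * d)}) : {set vec m} :=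
  [set brick j v | v in D].

Inductive colour := White | Ruled | Black.

Definition has_type m d (D : {set vec (m * d)}) (c : 'I_d -> colour) : Prop :=
  forall j, match c j with
            | White => #|proj j D| = 1%N
            | Ruled => (1 < #|proj j D| < 2 ^ m)%N
            | Black => proj j D = [set: vec m]
            end.

Definition shape d (a b : nat) : 'I_d -> colour :=
  fun j => if (j < a)%N then White else if (j < a + b)%N then Ruled else Black.
Arguments shape : clear implicits.

Definition non_type_preserving m d (lambda : {perm vec (m * d)}) : Prop :=
  forall a b c : nat, (b <= 1)%N -> (a + b + c)%N = d ->
    a <> d -> c <> d ->
  forall D : {set vec (m * d)}, has_type D (shape d a b) ->
    ~ has_type (lambda @: D) (shape d a b).

Definition is_linear n (f : vec n -> vec n) : Prop :=
  exists A : 'M['F_2]_n, forall v, f v = v *m A.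

(* round function eps_k = gamma lambda sigma_k (maps act on the right,
   mathcomp's perm product is left-to-right: (p * q) x = q (p x)) *)
Definition round n (gamma lambda : {perm vec n}) (k : vec n) : {perm vec n} :=
  (gamma * lambda * sigma k)%g.

Definition Gamma_inf n (gamma lambda : {perm vec n}) : {group {perm vec n}} :=
  <<[set round gamma lambda k | k : vec n]>>%G.

(* Main.v *)
Require Import Defs.
From mathcomp Require Import all_boot all_order all_algebra all_fingroup all_solvable.
From mathcomp Require Import zify.
Require Import Defs.
Set Implicit Arguments. Unset Strict Implicit. Unset Printing Implicit Defensive.
Import GRing.Theory.

Lemma odd_div_mod x i t : (t < i)%N -> odd (x %/ 2 ^ t) = odd ((x %% 2 ^ i) %/ 2 ^ t).
Proof.
move=> Ht; rewrite {1}(divn_eq x (2 ^ i)).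
have -> : (2 ^ i = 2 ^ (i-t) * 2 ^ t)%N by rewrite -expnD subnK // ltnW.
rewrite mulnA divnMDl ?expn_gt0 // oddD oddM oddX /=.
by rewrite orbF subn_eq0 leqNgt Ht andbF.
Qed.

Lemma bits_eq_mod x z i :
  (forall t, (t < i)%N -> odd (x %/ 2 ^ t) = odd (z %/ 2 ^ t)) <-> x = z %[mod 2 ^ i].
Proof.
split=> [H|H t Ht].
  rewrite -!sum_bits; apply: eq_bigr => t _; by rewrite H.
by rewrite (odd_div_mod x Ht) (odd_div_mod z Ht) H.
Qed.

Lemma F2_nat_eq (b c : bool) : ((b%:R : 'F_2) == c%:R)%R = (b == c).
Proof. by case: b; case: c. Qed.

Lemma int2vec_mod n x : int2vec n (x %% 2 ^ n) = int2vec n x.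
Proof. by apply/rowP => t; rewrite !mxE -odd_div_mod. Qed.

Lemma int2vec0 n : int2vec n 0 = 0%R.
Proof. by apply/rowP => t; rewrite !mxE div0n. Qed.

Lemma boxplus_int n x z : boxplus (int2vec n x) (int2vec n z) = int2vec n (x + z).
Proof.
by rewrite /boxplus !vec2intK -[in RHS]int2vec_mod modnDm.
Qed.

Lemma sigmaE n (k v : vec n) : sigma k v = boxplus v k.
Proof. by rewrite /sigma permE. Qed.

Lemma sigma0 n : sigma (0%R : vec n) = 1%g.
Proof.
apply/permP => v; rewrite sigmaE perm1.
have [x _ ->] := int2vec_onto v.
by rewrite -(int2vec0 n) boxplus_int addn0.
Qed.

Lemma sigma_at0 n (y : vec n) : sigma y 0%R = y.
Proof.
have [z _ ->] := int2vec_onto y.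
by rewrite sigmaE -(int2vec0 n) boxplus_int.
Qed.

Lemma nat_subgroup n (P : pred nat) : P 0 -> (forall x y, P x -> P y -> P (x + y)) ->
  (forall x, P (x + 2 ^ n) = P x) -> exists2 i, (i <= n)%N & forall x, P x = (2 ^ i %| x).
Proof.
move=> P0 PD Pper.
have Pk k x : P x -> P (k * x).
  by move=> Px; elim: k => [|k IH]; rewrite ?mul0n // mulSn PD.
have Pperk k x : P (x + k * 2 ^ n) = P x.
  elim: k => [|k IH]; first by rewrite mul0n addn0.
  by rewrite mulSn (addnC (2 ^ n)) addnA Pper IH.
have PN : P (2 ^ n) by rewrite -[2 ^ n]add0n Pper.
have ex : exists x, (0 < x) && P x by exists (2 ^ n); rewrite expn_gt0 PN.
case: (ex_minnP ex) => s /andP[s0 Ps] smin.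
have Hdiv x : P x -> (s %| x)%N.
  move=> Px; set r := x %% s; set q := x %/ s.
  have Pr : P r.
    have Hn : (0 < 2 ^ n)%N by rewrite expn_gt0.
    have := PD _ _ Px (Pk (q * (2 ^ n - 1)) _ Ps).
    have -> : (x + q * (2 ^ n - 1) * s = r + (q * s) * 2 ^ n)%N.
      rewrite (divn_eq x s) -/r -/q.
      move: (2 ^ n) Hn => N HN; case: N HN => // N _.
      rewrite subSS subn0 mulnS; lia.
    by rewrite Pperk.
  apply/eqP; apply/eqP; rewrite /dvdn -/r; apply/negPn/negP => rn0.
  have := smin r; rewrite lt0n rn0 Pr => /(_ isT).
  by rewrite leqNgt ltn_pmod.
have [i Hi Hs] : exists2 i, (i <= n)%N & s = 2 ^ i by apply/dvdn_pfactor => //; exact: Hdiv.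
exists i => // x; rewrite -Hs; apply/idP/idP; first exact: Hdiv.
by move/divnK <-; apply: Pk.
Qed.

Definition cset n (i : nat) (y : vec n) : {set vec n} :=
  [set w : vec n | [forall t : 'I_n, (t < i)%N ==> (w ord0 t == y ord0 t)]].

Lemma F2_ne (x : 'F_2) : (x != x + 1)%R.
Proof. by apply/eqP => /eqP; rewrite -subr_eq0 opprD addrA subrr add0r oppr_eq0 oner_eq0. Qed.
Lemma cset_card n i (y : vec n) : #|cset i y| = #|cset i (0 : vec n)%R|.
Proof.
apply/eqP; rewrite eqn_leq; apply/andP; split.
  rewrite -(card_imset _ (addIr (- y)%R)); apply: subset_leq_card.
  apply/subsetP => _ /imsetP[w Hw ->]; rewrite inE; apply/forallP => t.
  apply/implyP => Ht; move: Hw; rewrite inE => /forallP/(_ t); rewrite Ht /= => /eqP.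
  by rewrite !mxE => ->; rewrite subrr.
rewrite -(card_imset _ (addIr y)); apply: subset_leq_card.
apply/subsetP => _ /imsetP[w Hw ->]; rewrite inE; apply/forallP => t.
apply/implyP => Ht; move: Hw; rewrite inE => /forallP/(_ t); rewrite Ht /= => /eqP.
by rewrite !mxE => ->; rewrite add0r.
Qed.

Lemma cset_int2vec n i x z : (i <= n)%N ->
  (int2vec n x \in cset i (int2vec n z)) = (x == z %[mod 2 ^ i]).
Proof.
move=> Hin; rewrite inE; apply/forallP/eqP => H.
  apply/bits_eq_mod => t Ht.
  have Htn : (t < n)%N by apply: leq_trans Hin.
  by move: (H (Ordinal Htn)); rewrite /= Ht /int2vec !mxE F2_nat_eq => /eqP.
move=> t; apply/implyP => Ht; rewrite /int2vec !mxE F2_nat_eq; apply/eqP.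
exact: (proj2 (bits_eq_mod x z i) H t Ht).
Qed.

Lemma int2vec_vec2int n (v : vec n) : int2vec n (vec2int v) = v.
Proof. by have [x _ ->] := int2vec_onto v; rewrite vec2intK int2vec_mod. Qed.

Lemma gamma_type m d (gamma : {perm vec (m * d)}) gammas (D : {set vec (m * d)}) c :
  parallel_sbox gamma gammas -> has_type D c -> has_type (gamma @: D) c.
Proof.
move=> Hg HD j.
have Hp : proj j (gamma @: D) = gammas j @: proj j D.
  by rewrite /proj -!imset_comp; apply: eq_imset => v /=; rewrite Hg.
have Hc : #|gammas j @: proj j D| = #|proj j D| by apply: card_imset; exact: perm_inj.
move: (HD j); rewrite Hp Hc; case: (c j) => //.
move=> HT; apply/eqP; rewrite eqEcard subsetT Hc HT cardsT leqnn //.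
Qed.

Lemma cset_type m d (hm : (0 < m)%N) i (y : vec (m * d)) : (0 < i)%N -> (i < m * d)%N ->
  has_type (cset i y) (shape d (i %/ m) (0 < i %% m)%N).
Proof.
move=> i0 iN j; rewrite /shape.
set a := i %/ m; set r := i %% m.
have Hi : i = (a * m + r)%N by rewrite /a /r -divn_eq.
have rm : (r < m)%N by rewrite /r ltn_pmod.
have yin : y \in cset i y by rewrite inE; apply/forallP => t; apply/implyP.
have Hj := ltn_ord j.
case: ltnP => Hja.
  have Hp : proj j (cset i y) = [set brick j y].
    apply/setP => u; rewrite inE; apply/imsetP/eqP => [[v Hv ->]|->]; last by exists y.
    apply/rowP => t; rewrite !mxE.
    move: Hv; rewrite inE => /forallP/(_ (bidx j t)) /=.
    have Ht := ltn_ord t.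
    have := leq_mul (Hja : (j.+1 <= a)%N) (leqnn m).
    have -> : ((j * m + t) < i)%N = true by nia.
    by move=> _ /eqP.
  by rewrite Hp cards1.
case: ltnP => Hjab.
  have r0 : (0 < r)%N.
    by move: Hjab; case: (0 < r)%N => //; rewrite addn0 ltnNge Hja.
  move: Hjab; rewrite r0 addn1 ltnS => Hja'.
  have ja : nat_of_ord j = a by apply/eqP; rewrite eqn_leq Hja Hja'.
  apply/andP; split.
    apply/card_gt1P.
    have t1m : (m.-1 < m)%N by rewrite prednK.
    pose t1 := Ordinal t1m.
    pose y' : vec (m * d) := (\row_k (if k == bidx j t1 then y ord0 k + 1 else y ord0 k))%R.
    exists (brick j y), (brick j y'); split.
    - exact: imset_f.
    - apply: imset_f; rewrite inE; apply/forallP => t; apply/implyP => Ht.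
      rewrite /y' !mxE; case: ifP => [/eqP Et|_] //.
      move: Ht; rewrite Et /= ja; nia.
    - apply/eqP => /rowP /(_ t1); rewrite /y' !mxE eqxx => /eqP.
      by rewrite (negbTE (F2_ne _)).
  have t0m : (0 < m)%N by [].
  pose t0 := Ordinal t0m.
  have Hpr : proj j (cset i y) \proper [set: vec m].
    rewrite properT; apply/eqP => HP.
    pose u : vec m := (\row_t (if t == t0 then brick j y ord0 t + 1 else brick j y ord0 t))%R.
    have : u \in proj j (cset i y) by rewrite HP inE.
    case/imsetP => v Hv /rowP /(_ t0); rewrite /u !mxE eqxx.
    move: Hv; rewrite inE => /forallP/(_ (bidx j t0)) /=.
    have -> : ((j * m + 0) < i)%N = true by rewrite ja; nia.
    move=> /eqP ->; move/eqP; rewrite eq_sym; apply/negP; exact: F2_ne.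
  by have := proper_card Hpr; rewrite cardsT card_mx card_Fp // mul1n.
have Hij : (i <= j * m)%N.
  move: Hjab; case: posnP => r0; rewrite ?addn0 ?addn1 => H.
    by rewrite Hi r0 addn0 leq_mul2r H orbT.
  have := leq_mul (H : (a.+1 <= j)%N) (leqnn m); nia.
apply/setP => u; rewrite inE; apply/imsetP.
pose w : vec (m * d) :=
  (\row_k (if (k %/ m == j)%N then u ord0 (Ordinal (ltn_pmod k hm)) else y ord0 k))%R.
exists w.
  rewrite inE; apply/forallP => k; apply/implyP => Hk; rewrite /w !mxE.
  case: ifP => [/eqP Ek|_] //.
  have := leq_trunc_div k m; rewrite Ek; nia.
apply/rowP => t; rewrite /w !mxE /=.
have Ht := ltn_ord t.
have Ed : ((j * m + t) %/ m = j)%N by rewrite divnMDl // divn_small // addn0.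
rewrite Ed eqxx.
congr (u ord0 _); apply: val_inj => /=; by rewrite modnMDl modn_small.
Qed.

Theorem mainTheorem2 (m d : nat) (hm : (1 <= m)%N) (hd : (1 <= d)%N)
    (gamma : {perm 'rV['F_2]_(m * d)}) (gammas : 'I_d -> {perm 'rV['F_2]_m})
    (lambda : {perm 'rV['F_2]_(m * d)}) :
  parallel_sbox gamma gammas ->
  (forall j, gammas j 0%R != 0%R) ->
  is_linear lambda ->
  non_type_preserving lambda ->
  [primitive Gamma_inf gamma lambda, on [set: 'rV['F_2]_(m * d)] | 'P].
Proof.
move=> Hg _ _ Hntp.
set G := Gamma_inf gamma lambda.
have roundG k : round gamma lambda k \in G by apply/mem_gen/imsetP; exists k.
have sigG k : sigma k \in G.
  have -> : sigma k = ((round gamma lambda 0%R)^-1 * round gamma lambda k)%g.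
    by rewrite /round sigma0 mulg1 mulKg.
  by rewrite groupM ?groupV.
have trans : [transitive G, on [set: vec (m * d)] | 'P].
  apply/imsetP; exists 0%R; first by rewrite inE.
  apply/eqP; rewrite eqEsubset; apply/andP; split; last exact: subsetT.
  apply/subsetP => v _.
  apply/imsetP; exists (sigma v) => //; exact: (esym (sigma_at0 v)).
rewrite /primitive trans /=; apply/existsP => -[Q /and3P[Hpart Hacts /andP[HQ1 HQS]]].
have /and3P[/eqP Hcov Htriv H0] := Hpart.
have actQ g Y : g \in G -> Y \in Q -> g @: Y \in Q.
  move=> Hg' HY; have := (actsP Hacts) g Hg' Y; rewrite HY => H; exact: H.
have cov v : v \in cover Q by rewrite Hcov inE.
have pbQ x Y : Y \in Q -> x \in Y -> pblock Q x = Y by move=> HY Hx; apply: def_pblock.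
have blk g Y x : g \in G -> Y \in Q -> x \in Y -> g @: Y = pblock Q (g x).
  by move=> HgG HY Hx; symmetry; apply: pbQ; [apply: actQ | apply: imset_f].
set B := pblock Q 0%R.
have BQ : B \in Q := pblock_mem (cov 0%R).
have B0 : (0%R : vec (m * d)) \in B by rewrite mem_pblock cov.
have blkY Y y : Y \in Q -> y \in Y -> Y = sigma y @: B.
  by move=> HY Hy; rewrite (blk _ _ 0%R) ?sigG // sigma_at0 (pbQ y Y).
pose P := fun x => int2vec (m * d) x \in B.
have PD x z : P x -> P z -> P (x + z)%N.
  rewrite /P => Px Pz; rewrite -boxplus_int -sigmaE (blkY B _ BQ Pz).
  exact: imset_f.
have Pper x : P (x + 2 ^ (m * d))%N = P x.
  by rewrite /P -int2vec_mod modnDr int2vec_mod.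
have P0 : P 0%N by rewrite /P int2vec0.
have [i Hin HP] := nat_subgroup P0 PD Pper.
have NE : #|[set: vec (m * d)]| = (2 ^ (m * d))%N.
  by rewrite cardsT card_mx card_Fp // mul1n.
have cardY Y : Y \in Q -> #|Y| = #|B|.
  move=> HY; have /set0Pn[y Hy] : Y != set0 by apply: contraNneq H0 => <-.
  by rewrite (blkY Y y HY Hy) card_imset //; exact: perm_inj.
have Hcard : (2 ^ (m * d) = #|Q| * #|B|)%N.
  by rewrite -NE (card_partition Hpart) -sum_nat_const; apply: eq_bigr.
have Npos : (0 < 2 ^ (m * d))%N by rewrite expn_gt0.
have Bmem x : (int2vec (m * d) x \in B) = (2 ^ i %| x)%N by rewrite -HP.
case: (posnP i) => [i0|i0].
  have HB : B = setT.
    by apply/setP => v; rewrite inE -(int2vec_vec2int v) Bmem i0 expn0 dvd1n.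
  rewrite HB NE in Hcard; nia.
case: (ltngtP i (m * d)) => [iN|iN|iN]; last first.
  have : #|B| = 1%N.
    apply/eqP; rewrite eqn_leq; apply/andP; split; last by apply/card_gt0P; exists 0%R.
    apply: (@leq_trans #|[set (0%R : vec (m * d))]|); last by rewrite cards1.
    apply: subset_leq_card.
    apply/subsetP => v; have [x Hx ->] := int2vec_onto v.
    rewrite Bmem iN inE => Hd.
    have -> : x = 0%N.
      by apply/eqP; move: Hd; rewrite /dvdn modn_small.
    by rewrite int2vec0.
  move=> HB; rewrite HB muln1 in Hcard; move: HQS; rewrite NE Hcard ltnn //.
  by rewrite leqNgt iN in Hin.
(* 0 < i < n *)
have Bc : B = cset i 0%R.
  apply/setP => v; have [x _ ->] := int2vec_onto v.
  rewrite Bmem -(int2vec0 (m * d)) (cset_int2vec _ _ (ltnW iN)) mod0n //.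
set e0 := round gamma lambda 0%R.
set y := e0 0%R.
have YQ : e0 @: B \in Q := actQ _ _ (roundG _) BQ.
have Yy : y \in e0 @: B by apply: imset_f.
have HY1 := blkY _ _ YQ Yy.
have HY2 : sigma y @: B = cset i y.
  apply/eqP; rewrite eqEcard; apply/andP; split.
    apply/subsetP => _ /imsetP[v Hv ->].
    have [x _ Ex] := int2vec_onto v; have [z _ Ez] := int2vec_onto y.
    move: Hv; rewrite Ex Bmem => Hx.
    rewrite Ez sigmaE boxplus_int (cset_int2vec _ _ (ltnW iN)).
    by apply/eqP; rewrite -modnDml; move: Hx; rewrite /dvdn => /eqP ->; rewrite add0n.
  by rewrite card_imset ?Bc ?cset_card //; exact: perm_inj.
have He0 : e0 @: B = lambda @: (gamma @: B).
  rewrite -imset_comp; apply: eq_imset => x.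
  by rewrite /e0 /round sigma0 mulg1 permM.
have T1 := gamma_type Hg (cset_type hm 0%R i0 iN).
have T2 := cset_type hm y i0 iN.
rewrite -HY2 -HY1 He0 Bc in T2.
have aD : (i %/ m < d)%N by rewrite ltn_divLR // mulnC.
have Hi := divn_eq i m.
have rm : (i %% m < m)%N by rewrite ltn_pmod.
apply: (Hntp (i %/ m) (0 < i %% m)%N (d - (i %/ m + (0 < i %% m)%N)) _ _ _ _ _ T1 T2).
- by case: (0 < i %% m)%N.
- by rewrite subnKC //; case: (0 < i %% m)%N; rewrite ?addn1 ?addn0 // ltnW.
- by move=> E; rewrite E ltnn in aD.
- move=> E.
  have Hb : (i %/ m + (0 < i %% m)%N <= d)%N.
    by case: (0 < i %% m)%N; rewrite ?addn1 ?addn0 // ltnW.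
  move: Hb E; case: (posnP (i %% m)) => Hr /= Hb E.
    rewrite addn0 in Hb E; rewrite Hr addn0 in Hi.
    have a0 : (i %/ m = 0)%N by lia.
    by rewrite Hi a0 mul0n in i0.
  rewrite addn1 in Hb E; lia.
Qed.
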